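(* Let $\tau$ be a substitution satisfying the standing assumptions below such that $(X_\tau,\sigma)$ is quasi-invertible, and let $U\subset X_\tau$ be a clopen set containing the branch point. Let $h:U\to\{1,\ldots,H\}$ be the height function, $h(x)=\min\{k\ge1:\sigma^k(x)\in U\}$, and for $1\le k\le H$ and $0\le j\le k-1$ let $U_k^j=\sigma^j(h^{-1}(\{k\}))$. Then the sets $\{U_k^j:1\le k\le H,\ 0\le j\le k-1\}$ form a partition of $X_\tau$ into clopen sets.
   Context: Substitutions are extended to words and sequences by concatenation; $u$ is a fixed point of $\tau$, $\sigma$ the left shift, $X_\tau$ the closure of $\{\sigma^n(u):n\ge0\}$ in $\mathcal A^{\mathbb N}$. A branch point is a point of $X_\tau$ with more than one $\sigma$-preimage in $X_\tau$; quasi-invertible means $X_\tau$ has exactly one branch point. Standing assumptions: $\tau$ primitive (so $(X_\tau,\sigma)$ is minimal and $h$ is finite-valued and bounded), $X_\tau$ infinite, $\tau$ unilaterally recognizable, all powers of $\tau$ injective on letters. *)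

(* Defs.v *)
From mathcomp Require Import all_boot.
Set Implicit Arguments. Unset Strict Implicit. Unset Printing Implicit Defensive.

Definition word_sub (A : Type) (tau : A -> seq A) (w : seq A) : seq A :=
  flatten (map tau w).

Definition sub_pow (A : Type) (tau : A -> seq A) (n : nat) (w : seq A) : seq A :=
  iter n (word_sub tau) w.

Definition prefix (A : Type) (x : nat -> A) (n : nat) : seq A := mkseq x n.

(* Extension of tau to infinite words by concatenation: the i-th letter of
   tau(y) is the i-th letter of tau(y_0 ... y_i) (correct for non-erasing tau,
   which is implied by primitivity). *)
Definition sub_inf (A : Type) (tau : A -> seq A) (y : nat -> A) : nat -> A :=
  fun i => nth (y 0) (word_sub tau (prefix y i.+1)) i.

Definition shift (A : Type) (x : nat -> A) : nat -> A := fun i => x i.+1.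
Definition shiftn (A : Type) (j : nat) (x : nat -> A) : nat -> A :=
  fun i => x (i + j).

Definition agree (A : Type) (n : nat) (x y : nat -> A) : Prop :=
  forall i, i < n -> x i = y i.

Definition primitive (A : finType) (tau : A -> seq A) : Prop :=
  exists n, 0 < n /\ forall a b : A, b \in sub_pow tau n [:: a].

Definition fixed_point (A : Type) (tau : A -> seq A) (u : nat -> A) : Prop :=
  u = sub_inf tau u.

(* X_tau = closure of the sigma-orbit of u in A^N (product topology,
   A discrete): x in X_tau iff every prefix of x is a prefix of some sigma^m u *)
Definition Xtau (A : Type) (u : nat -> A) (x : nat -> A) : Prop :=
  forall n, exists m, agree n x (shiftn m u).

Definition finite_words (A : Type) (S : (nat -> A) -> Prop) : Prop :=
  exists l : seq (nat -> A),
    forall x, S x -> exists i, i < size l /\ x = nth x l i.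

Definition powers_injective_on_letters (A : Type) (tau : A -> seq A) : Prop :=
  forall n (a b : A), sub_pow tau n [:: a] = sub_pow tau n [:: b] -> a = b.

Definition recog_rep (A : Type) (tau : A -> seq A) (u : nat -> A)
  (x : nat -> A) (k : nat) (y : nat -> A) : Prop :=
  Xtau u y /\ k < size (tau (y 0)) /\ x = shiftn k (sub_inf tau y).

Definition unilaterally_recognizable (A : Type) (tau : A -> seq A)
  (u : nat -> A) : Prop :=
  forall x, Xtau u x ->
    exists k y, recog_rep tau u x k y /\
      forall k' y', recog_rep tau u x k' y' -> k' = k /\ y' = y.

Definition branch_point (A : Type) (u : nat -> A) (x : nat -> A) : Prop :=
  Xtau u x /\ exists y1 y2, Xtau u y1 /\ Xtau u y2 /\ y1 <> y2 /\
    shift y1 = x /\ shift y2 = x.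

Definition quasi_invertible (A : Type) (u : nat -> A) : Prop :=
  exists b, branch_point u b /\ forall x, branch_point u x -> x = b.

Definition rel_open (A : Type) (X U : (nat -> A) -> Prop) : Prop :=
  forall x, U x -> exists n, forall y, X y -> agree n x y -> U y.

Definition rel_clopen (A : Type) (X U : (nat -> A) -> Prop) : Prop :=
  (forall x, U x -> X x) /\ rel_open X U /\ rel_open X (fun y => X y /\ ~ U y).

Definition height_is (A : Type) (U : (nat -> A) -> Prop) (x : nat -> A)
  (k : nat) : Prop :=
  1 <= k /\ U (shiftn k x) /\ forall i, 1 <= i -> i < k -> ~ U (shiftn i x).

Definition tower_level (A : Type) (U : (nat -> A) -> Prop) (k j : nat)
  (x : nat -> A) : Prop :=
  exists y, U y /\ height_is U y k /\ x = shiftn j y.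

(* Main.v *)
Require Import Defs.
From mathcomp Require Import all_boot zify.
From Stdlib Require Import Classical FunctionalExtensionality.
Import Defs.
Set Implicit Arguments. Unset Strict Implicit.


Lemma shiftnD (A : Type) a b (x : nat -> A) : shiftn a (shiftn b x) = shiftn (a + b) x.
Proof. apply: functional_extensionality => i; rewrite /shiftn; congr x; lia. Qed.

Lemma shift_shiftn (A : Type) i (x : nat -> A) : shift (shiftn i x) = shiftn i.+1 x.
Proof. apply: functional_extensionality => n; rewrite /shiftn /shift; congr x; lia. Qed.

Lemma Xtau_shift (A : Type) (u x : nat -> A) j : Xtau u x -> Xtau u (shiftn j x).
Proof.
move=> Hx n; have [m Hm] := Hx (n + j); exists (j + m) => i Hi.
rewrite /shiftn Hm; last lia. congr u; lia.
Qed.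

Lemma Xtau_u (A : Type) (u : nat -> A) m : Xtau u (shiftn m u).
Proof. move=> n; exists m => i _ //. Qed.

Lemma agree_shift (A : Type) n i (x y : nat -> A) :
  agree (n + i) x y -> agree n (shiftn i x) (shiftn i y).
Proof. move=> H l Hl; rewrite /shiftn H //; lia. Qed.

Lemma agree_le (A : Type) n m (x y : nat -> A) : agree n x y -> m <= n -> agree m x y.
Proof. move=> H Hmn l Hl; apply: H; lia. Qed.

Lemma agree_trans (A : Type) n (x y z : nat -> A) : agree n x y -> agree n y z -> agree n x z.
Proof. move=> H1 H2 l Hl; rewrite H1 // H2 //. Qed.

Lemma agree_sym (A : Type) n (x y : nat -> A) : agree n x y -> agree n y x.
Proof. move=> H l Hl; rewrite H //. Qed.

Lemma clopen_closed (A : Type) (u : nat -> A) (U : (nat -> A) -> Prop) y :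
  rel_clopen (Xtau u) U -> Xtau u y -> (forall n, exists z, U z /\ agree n y z) -> U y.
Proof.
move=> [HUX [_ HC]] Hy Hn; apply: NNPP => nU.
have [n0 Hn0] := HC y (conj Hy nU).
have [z [Uz Az]] := Hn n0.
by have [_ ] := Hn0 z (HUX _ Uz) Az.
Qed.

Lemma uniformize (T : finType) (Q : T -> nat -> Prop) :
  (forall t n m, n <= m -> Q t n -> Q t m) ->
  (forall t, exists n, Q t n) -> exists n, forall t, Q t n.
Proof.
move=> Hmon Hall.
suff: forall s : seq T, exists n, forall t, t \in s -> Q t n.
  by move=> /(_ (enum T)) [n Hn]; exists n => t; apply: Hn; rewrite mem_enum.
elim=> [|t0 s [n IH]]; first by exists 0.
have [n0 H0] := Hall t0; exists (maxn n n0) => t; rewrite in_cons => /orP [/eqP->|Ht].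
  by apply: Hmon H0; apply: leq_maxr.
by apply: Hmon (IH t Ht); apply: leq_maxl.
Qed.

Lemma pigeon (T : finType) (P : T -> nat -> Prop) :
  (forall t n m, m <= n -> P t n -> P t m) ->
  (forall n, exists t, P t n) -> exists t, forall n, P t n.
Proof.
move=> Hmon Hall; apply: NNPP => Hno.
have H1 : forall t, exists n, ~ P t n.
  move=> t; apply: NNPP => Hc; apply: Hno; exists t => n; apply: NNPP => Hp; apply: Hc; by exists n.
have [n Hn] := uniformize (Q := fun t n => ~ P t n) (fun t n m Hnm Hq Hp => Hq (Hmon t m n Hnm Hp)) H1.
have [t Ht] := Hall n; exact: Hn t Ht.
Qed.

Lemma first_diff (T : Type) (F G : nat -> T) j :
  F 0 <> G 0 -> F j = G j -> exists i, i < j /\ F i <> G i /\ F i.+1 = G i.+1.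
Proof.
elim: j => [|j IH] H0 Hj; first by [].
case: (classic (F j = G j)) => Hc.
  by have [i [Hi Hi2]] := IH H0 Hc; exists i; split=> //; lia.
by exists j.
Qed.

Lemma level_X (A : Type) (u : nat -> A) U k j x :
  (forall x, U x -> Xtau u x) -> tower_level U k j x -> Xtau u x.
Proof. move=> HUX [y [Uy [_ ->]]]; exact: Xtau_shift (HUX _ Uy). Qed.

Lemma disj_eq (A : Type) (U : (nat -> A) -> Prop) k k' j x :
  j < k -> j < k' -> tower_level U k j x -> tower_level U k' j x -> k = k'.
Proof.
move=> Hk Hk' [y [Uy [[h1 [h2 h3]] Ex]]] [y' [Uy' [[h1' [h2' h3']] Ex']]].
have key : forall k1 k2 (y1 y2 : nat -> A), j < k1 -> k1 < k2 ->
    U (shiftn k1 y1) -> (forall i, 1 <= i -> i < k2 -> ~ U (shiftn i y2)) ->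
    shiftn j y1 = shiftn j y2 -> False.
  move=> k1 k2 y1 y2 Hj Hlt U1 N2 E.
  have E2 : shiftn k1 y1 = shiftn k1 y2.
    have -> : k1 = (k1 - j) + j by lia.
    by rewrite -!shiftnD E.
  apply: (N2 k1); [lia | lia | by rewrite -E2].
case: (ltngtP k k') => // Hc.
  exfalso; apply: (key k k' y y') => //; by rewrite -Ex.
exfalso; apply: (key k' k y' y) => //; by rewrite -Ex'.
Qed.

Lemma disj_lt (A : Type) (u : nat -> A) (U : (nat -> A) -> Prop) k k' j j' x :
  (forall x, U x -> Xtau u x) -> (forall b, branch_point u b -> U b) ->
  j < k -> j < j' -> j' < k' ->
  tower_level U k j x -> tower_level U k' j' x -> False.
Proof.
move=> HUX HUb Hjk0 Hjj Hjk [y [Uy [[h1 [h2 h3]] Ex]]] [y' [Uy' [[h1' [h2' h3']] Ex']]].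
set w := shiftn (j' - j) y'.
have Ew : shiftn j y = shiftn j w.
  by rewrite /w shiftnD -Ex Ex' (subnKC (ltnW Hjj)).
have nUw : ~ U w by apply: h3'; lia.
have H0 : shiftn 0 y <> shiftn 0 w.
  have s0 : forall z : nat -> A, shiftn 0 z = z.
    by move=> z; apply: functional_extensionality => l; rewrite /shiftn addn0.
  by rewrite !s0 => E; apply: nUw; rewrite -E.
have [i [Hi [Hne Heq]]] := first_diff (F := fun i => shiftn i y) (G := fun i => shiftn i w) H0 Ew.
have Xw : Xtau u w by apply: Xtau_shift; apply: HUX.
have bp : branch_point u (shiftn i.+1 y).
  split; first by apply: Xtau_shift; apply: HUX.
  exists (shiftn i y), (shiftn i w); split; first by apply: Xtau_shift; apply: HUX.
  split; first exact: Xtau_shift.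
  split => //; split; rewrite shift_shiftn //.
apply: (h3 i.+1); [lia | lia | exact: HUb].
Qed.

Lemma disj (A : Type) (u : nat -> A) (U : (nat -> A) -> Prop) k k' j j' x :
  (forall x, U x -> Xtau u x) -> (forall b, branch_point u b -> U b) ->
  j < k -> j' < k' ->
  tower_level U k j x -> tower_level U k' j' x -> k = k' /\ j = j'.
Proof.
move=> HUX HUb Hk Hk' L1 L2.
case: (ltngtP j j') => Hc.
- by exfalso; apply: (disj_lt HUX HUb Hk Hc Hk' L1 L2).
- by exfalso; apply: (disj_lt HUX HUb Hk' Hc Hk L2 L1).
- subst j'; split => //; exact: (disj_eq Hk Hk' L1 L2).
Qed.

Lemma level_closed (A : finType) (u : nat -> A) (U : (nat -> A) -> Prop) k j x :
  rel_clopen (Xtau u) U -> Xtau u x -> ~ tower_level U k j x ->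
  exists n, forall z, Xtau u z -> agree n x z -> ~ tower_level U k j z.
Proof.
move=> HU Hx Hnl; apply: NNPP => Hc.
have Hn : forall n, exists y, U y /\ height_is U y k /\ agree n x (shiftn j y).
  move=> n; apply: NNPP => Hno; apply: Hc; exists n => z Xz Az [y [Uy [Hy Ez]]].
  apply: Hno; exists y; split=> //; split=> //; by rewrite -Ez.
pose P (t : j.-tuple A) n := exists y, [/\ U y, height_is U y k, agree n x (shiftn j y)
   & forall i, i < j -> y i = nth (x 0) t i].
have [t Ht] : exists t, forall n, P t n.
  apply: pigeon.
    move=> t n m Hmn [y [? ? Ha ?]]; exists y; split=> //; by apply: (agree_le Ha); lia.
  move=> n; have [y [Uy [Hy Ha]]] := Hn n.
  have sz : size (mkseq y j) == j by rewrite size_mkseq.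
  exists (Tuple sz), y; split=> // i Hi /=; by rewrite nth_mkseq.
pose y i := if i < j then nth (x 0) t i else x (i - j).
have Ay : forall n, exists yn, [/\ U yn, height_is U yn k & agree (j + n) y yn].
  move=> n; have [yn [Uyn Hyn Ha Hp]] := Ht n; exists yn; split=> // i Hi.
  rewrite /y; case: ifP => Hij; first by rewrite Hp.
  have := Ha (i - j) ltac:(lia); rewrite /shiftn => ->; congr yn; lia.
have [HUX [HUo HUc]] := HU.
have Xy : Xtau u y.
  move=> n; have [yn [Uyn _ Ha]] := Ay n; have [m Hm] := HUX _ Uyn n.
  exists m; apply: (agree_trans _ Hm); by apply: (agree_le Ha); lia.
apply: Hnl; exists y; split.
- apply: (clopen_closed HU Xy) => n; have [yn [Uyn _ Ha]] := Ay n; exists yn; split=> //; by apply: (agree_le Ha); lia.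
- split; last first.
    apply: functional_extensionality => i; rewrite /shiftn /y.
    case: ifP => Hij; first lia. congr x; lia.
  split; first by have [yn [_ Hhh _]] := Ay 0; case: Hhh.
  split.
  + apply: (clopen_closed HU (Xtau_shift k Xy)) => n.
    have [yn [_ [_ [h2 _]] Ha]] := Ay (n + k); exists (shiftn k yn); split=> //.
    apply: agree_shift; by apply: (agree_le Ha); lia.
  + move=> i Hi1 Hik Ui.
    have [n0 Hn0] := HUo _ Ui.
    have [yn [Uyn [_ [_ h3]] Ha]] := Ay (n0 + i).
    apply: (h3 i Hi1 Hik); apply: Hn0; first by apply: Xtau_shift; apply: HUX.
    apply: agree_shift; by apply: (agree_le Ha); lia.
Qed.

Section W.
Variables (A : Type) (tau : A -> seq A).
Hypothesis Hne : forall c, 0 < size (tau c).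

Lemma word_sub_cat s1 s2 : word_sub tau (s1 ++ s2) = word_sub tau s1 ++ word_sub tau s2.
Proof. by rewrite /word_sub map_cat flatten_cat. Qed.

Lemma sub_pow_cat n s1 s2 : sub_pow tau n (s1 ++ s2) = sub_pow tau n s1 ++ sub_pow tau n s2.
Proof. elim: n => [//|n IH]; by rewrite /sub_pow !iterS -/(sub_pow _ _ _) IH word_sub_cat. Qed.

Lemma sub_pow_nil n : sub_pow tau n [::] = [::].
Proof. elim: n => [//|n IH]; by rewrite /sub_pow iterS -/(sub_pow _ _ _) IH. Qed.

Lemma size_word_sub s : size s <= size (word_sub tau s).
Proof.
elim: s => [//|c s IH]; rewrite (word_sub_cat [:: c] s) size_cat /word_sub /= cats0.
have := Hne c; rewrite -/(word_sub tau s); lia.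
Qed.

Lemma size_sub_pow n s : size s <= size (sub_pow tau n s).
Proof.
elim: n => [//|n IH]; rewrite /sub_pow iterS -/(sub_pow _ _ _).
exact: leq_trans IH (size_word_sub _).
Qed.

Lemma prefix_take (y : nat -> A) L1 L2 : L1 <= L2 -> take L1 (prefix y L2) = prefix y L1.
Proof. move=> H; rewrite /prefix /mkseq -map_take take_iota; by have -> : minn L1 L2 = L1 by lia. Qed.

Lemma prefix_split (y : nat -> A) L1 L2 : L1 <= L2 ->
  prefix y L2 = prefix y L1 ++ drop L1 (prefix y L2).
Proof. by move=> H; rewrite -{1}(cat_take_drop L1 (prefix y L2)) prefix_take. Qed.

Lemma sub_inf_prefix (y : nat -> A) L i :
  i < size (word_sub tau (prefix y L)) ->
  sub_inf tau y i = nth (y 0) (word_sub tau (prefix y L)) i.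
Proof.
move=> Hi; rewrite /sub_inf.
case: (leqP L i.+1) => HL.
  by rewrite (prefix_split y HL) word_sub_cat nth_cat Hi.
have HL' : i.+1 <= L by lia.
rewrite (prefix_split y HL') word_sub_cat nth_cat.
have := size_word_sub (prefix y i.+1); rewrite size_mkseq => Hs.
by have -> : i < size (word_sub tau (prefix y i.+1)) by lia.
Qed.
End W.

Lemma nth_mid (T : Type) (x0 : T) (X W Y : seq T) i :
  i < size W -> nth x0 (X ++ W ++ Y) (size X + i) = nth x0 W i.
Proof. move=> Hi; rewrite nth_cat ltnNge leq_addr /= addKn nth_cat Hi //. Qed.

Lemma recurrence (A : finType) (tau : A -> seq A) (u : nat -> A) :
  primitive tau -> fixed_point tau u -> ~ finite_words (Xtau u) ->
  forall L M, exists q, M <= q /\ agree L u (shiftn q u).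
Proof.
move=> [N [HN Hall]] Hfix Hinf L M.
have sp1 : forall n w, sub_pow tau n.+1 w = sub_pow tau n (word_sub tau w).
  by move=> n w; rewrite /sub_pow iterSr.
have ws1 : forall c, word_sub tau [:: c] = tau c by move=> c; rewrite /word_sub /= cats0.
have Hne : forall c, 0 < size (tau c).
  move=> c; have := Hall c c; case: N HN {Hall} => [//|N'] _.
  rewrite sp1 ws1; case E: (tau c) => [|d t] //; by rewrite sub_pow_nil.
set a := u 0.
pose starts (w : seq A) := forall i, i < size w -> u i = nth a w i.
have st_ws : forall w, starts w -> starts (word_sub tau w).
  move=> w Hw.
  have Ew : w = prefix u (size w).
    apply: (@eq_from_nth _ a); first by rewrite size_mkseq.
    by move=> i Hi; rewrite nth_mkseq // Hw.
  move=> i Hi; have -> : u i = sub_inf tau u i by rewrite {1}Hfix.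
  rewrite Ew in Hi *; exact: sub_inf_prefix Hi.
have stW : forall n, starts (sub_pow tau n [:: a]).
  elim=> [|n IH]; first by move=> [|i] //.
  rewrite /sub_pow iterS -/(sub_pow _ _ _); exact: st_ws.
have [r Ea] : exists r, tau a = a :: r.
  have := stW 1; rewrite /sub_pow /= -/(word_sub tau [:: a]) ws1.
  case E: (tau a) => [|c r]; first by have := Hne a; rewrite E.
  move=> H; exists r; have := H 0 erefl; rewrite /= -/a => ->; done.
case: r Ea => [|b s] Ea.
  exfalso; apply: Hinf.
  have Wa : forall n, sub_pow tau n [:: a] = [:: a].
    elim=> [//|n IH]; by rewrite sp1 ws1 Ea.
  have alla : forall c : A, c = a.
    move=> c; have := Hall a c; rewrite Wa inE => /eqP //.
  exists [:: (fun _ => a)] => x _; exists 0; split=> //=.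
  by apply: functional_extensionality => i; apply: alla.
have Wsplit : forall n, sub_pow tau n.+1 [:: a] = sub_pow tau n [:: a] ++ sub_pow tau n (b :: s).
  by move=> n; rewrite sp1 ws1 Ea -sub_pow_cat.
have grow : forall n, n < size (sub_pow tau n [:: a]).
  elim=> [//|n IH]; rewrite Wsplit size_cat.
  have := size_sub_pow Hne n (b :: s); rewrite /=; lia.
have [c1 [c2 Eb]] : exists c1 c2, sub_pow tau N [:: b] = c1 ++ a :: c2.
  have Hin := Hall b a; set w := sub_pow tau N [:: b] in Hin *.
  exists (take (index a w) w), (drop (index a w).+1 w).
  rewrite -{1}(cat_take_drop (index a w) w) (drop_nth a); last by rewrite index_mem.
  by rewrite nth_index.
set n := L + M.
set m := n + N.
have Em : sub_pow tau m.+1 [:: a] =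
   (sub_pow tau m [:: a] ++ sub_pow tau n c1) ++ sub_pow tau n [:: a] ++
     (sub_pow tau n c2 ++ sub_pow tau m s).
  have spD : forall w, sub_pow tau (n + N) w = sub_pow tau n (sub_pow tau N w).
    by move=> w; rewrite /sub_pow iterD.
  rewrite Wsplit (sub_pow_cat tau m [:: b] s) /m (spD [:: b]) Eb.
  rewrite (sub_pow_cat tau n c1 (a :: c2)) (sub_pow_cat tau n [:: a] c2).
  by rewrite -!catA.
set X := sub_pow tau m [:: a] ++ sub_pow tau n c1.
exists (size X); split.
  rewrite /X size_cat; have := grow m; rewrite /m /n; lia.
move=> i Hi; rewrite /shiftn.
have Hin : i < size (sub_pow tau n [:: a]) by have := grow n; rewrite /n; lia.
rewrite (stW n i Hin) (stW m.+1); last first.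
  rewrite Em !size_cat; lia.
by rewrite Em addnC nth_mid.
Qed.
Unset Implicit Arguments. Set Strict Implicit.

Theorem lemma14 (A : finType) (tau : A -> seq A) (u : nat -> A)
  (Hprim : primitive tau)
  (Hfix : fixed_point tau u)
  (Hinf : ~ finite_words (Xtau u))
  (Hrec : unilaterally_recognizable tau u)
  (Hinj : powers_injective_on_letters tau)
  (Hqi : quasi_invertible u)
  (U : (nat -> A) -> Prop)
  (HU : rel_clopen (Xtau u) U)
  (HUb : forall b, branch_point u b -> U b)
  (H : nat)
  (Hh : forall x, U x -> exists k, 1 <= k <= H /\ height_is U x k) :
  (forall k j, 1 <= k <= H -> j < k -> rel_clopen (Xtau u) (tower_level U k j))
  /\ (forall x, Xtau u x ->
        exists k j, [/\ 1 <= k <= H, j < k & tower_level U k j x])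
  /\ (forall k j k' j' x, 1 <= k <= H -> j < k -> 1 <= k' <= H -> j' < k' ->
        tower_level U k j x -> tower_level U k' j' x -> k = k' /\ j = j').
Proof.
have HUX := HU.1.
have [HUo HUc] := HU.2.
have Hdisj : forall k j k' j' x, 1 <= k <= H -> j < k -> 1 <= k' <= H -> j' < k' ->
        tower_level U k j x -> tower_level U k' j' x -> k = k' /\ j = j'.
  move=> k j k' j' x _ Hk _ Hk'; exact: disj HUX HUb Hk Hk'.
have [p0 Up0] : exists p0, U (shiftn p0 u).
  have [b [bb _]] := Hqi.
  have [n0 Hn0] := HUo b (HUb b bb).
  have [m0 Hm0] := bb.1 n0.
  exists m0; apply: Hn0 => //; exact: Xtau_u.
have orbit_in : forall m, p0 <= m ->
    exists k j, [/\ 1 <= k <= H, j < k & tower_level U k j (shiftn m u)].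
  move=> m Hm.
  have [p [Hpm [Up Hq]]] : exists p, p <= m /\ U (shiftn p u) /\
      forall q, p < q -> q <= m -> ~ U (shiftn q u).
    elim: m Hm => [|m IH] Hm.
      have E : p0 = 0 by lia.
      rewrite E in Up0; exists 0; split=> //; split=> //.
      move=> q; lia.
    case: (classic (U (shiftn m.+1 u))) => Hc.
      exists m.+1; split=> //; split=> // q; lia.
    have Hm' : p0 <= m.
      apply: NNPP => H'; have E : p0 = m.+1 by lia.
      by apply: Hc; rewrite -E.
    have [p [Hp [Up Hq]]] := IH Hm'.
    exists p; split; first lia; split=> // q Hpq Hqm.
    case: (ltnP q m.+1) => E; first by apply: Hq; lia.
    have E' : q = m.+1 by lia.
    by rewrite E'.
  have [k [Hk [h1 [h2 h3]]]] := Hh _ Up.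
  exists k, (m - p); split=> //.
    case: (ltnP (m - p) k) => // Hkm; exfalso.
    apply: (Hq (k + p)); [lia | lia | by rewrite -shiftnD].
  exists (shiftn p u); split=> //; split; first by split.
  by rewrite shiftnD subnK.
have Hcov : forall x, Xtau u x ->
        exists k j, [/\ 1 <= k <= H, j < k & tower_level U k j x].
  move=> x Hx; apply: NNPP => Hno.
  pose Q (t : 'I_H.+1 * 'I_H.+1) n := 1 <= t.1 <= H -> t.2 < t.1 ->
     forall z, Xtau u z -> agree n x z -> ~ tower_level U t.1 t.2 z.
  have [N HN] : exists N, forall t, Q t N.
    apply: uniformize.
      move=> t n n' Hnn' Hq h1 h2 z Xz Az; apply: Hq => //; apply: (agree_le Az); lia.
    move=> [k j]; case: (classic (1 <= k <= H /\ j < k)) => [[h1 h2]|hn].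
      have Hnl : ~ tower_level U k j x by move=> L; apply: Hno; exists k, j.
      have [n Hn] := level_closed HU Hx Hnl; exists n => _ _; exact: Hn.
    by exists 0 => h1 h2; exfalso; apply: hn.
  have [m0 Hm0] := Hx N.
  have [q [Hq Aq]] := recurrence Hprim Hfix Hinf (m0 + N) p0.
  have Az : agree N x (shiftn (m0 + q) u).
    move=> i Hi; rewrite Hm0 // /shiftn.
    have := Aq (i + m0) ltac:(lia); rewrite /shiftn => ->; congr u; lia.
  have [k [j [Hk Hj L]]] := orbit_in (m0 + q) ltac:(lia).
  have Hk' : k < H.+1 by lia.
  have Hj' : j < H.+1 by lia.
  exact: (HN (Ordinal Hk', Ordinal Hj') Hk Hj _ (Xtau_u _ _) Az L).
split; last split => //.
move=> k j Hk Hj.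
split; first by move=> x; exact: level_X HUX.
split; last first.
  move=> x [Hx Hnl]; have [n Hn] := level_closed HU Hx Hnl.
  by exists n => z Xz Az; split=> //; exact: Hn.
move=> x Lx; have Hx := level_X HUX Lx.
pose Q (t : 'I_H.+1 * 'I_H.+1) n := 1 <= t.1 <= H -> t.2 < t.1 -> ~ ((t.1 : nat) = k /\ (t.2 : nat) = j) ->
     forall z, Xtau u z -> agree n x z -> ~ tower_level U t.1 t.2 z.
have [N HN] : exists N, forall t, Q t N.
  apply: uniformize.
    move=> t n n' Hnn' Hq h1 h2 h3 z Xz Az; apply: Hq => //; apply: (agree_le Az); lia.
  move=> [k' j']; case: (classic (1 <= k' <= H /\ j' < k')) => [[h1 h2]|hn]; last first.
    by exists 0 => h1 h2; exfalso; apply: hn.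
  case: (classic ((k' : nat) = k /\ (j' : nat) = j)) => hkj; first by exists 0.
  have Hnl : ~ tower_level U k' j' x.
    by move=> L; apply: hkj; exact: (Hdisj _ _ _ _ _ h1 h2 Hk Hj L Lx).
  have [n Hn] := level_closed HU Hx Hnl; exists n => _ _ _; exact: Hn.
exists N => z Xz Az.
have [k' [j' [Hk' Hj' L']]] := Hcov z Xz.
case: (classic (k' = k /\ j' = j)) => [[E1 E2]|hkj]; first by rewrite -E1 -E2.
have Hk'' : k' < H.+1 by lia.
have Hj'' : j' < H.+1 by lia.
by exfalso; apply: (HN (Ordinal Hk'', Ordinal Hj'') Hk' Hj' hkj z Xz Az L').
Qed.
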